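(* Let $\hat T^{\downarrow}_k$ be a random ranked plane tree with $k$ leaves produced by a Markov splitting model, let $\hat T_k$ be its underlying plane tree and $T_k$ its underlying (non-plane, unranked) tree. Suppose the model is split-exchangeable (i.e. $\Pr\{\hat T^{\downarrow}_k=\hat t^{\downarrow}_k\}$ is the same for all ranked plane trees with the same underlying plane tree) and plane-invariant (i.e. $\Pr\{\hat T_k=\hat t_k\}$ is the same for all plane trees with the same underlying tree). Then for every tree $t_k$ with $k$ leaves, \[ \Pr\{T_k=t_k\}=B(t_k)\times 2^{k-1-s(t_k)}\times\Pr\{\hat T^{\downarrow}_k=\hat t^{\downarrow}_k\}, \] where $\hat t^{\downarrow}_k$ is any ranked plane tree whose underlying tree is $t_k$, $B(t_k)=(k-1)!/\prod_{u\in\breve V(t_k)}\lfloor t_k(u)\rfloor$ ($\breve V(t_k)$ the internal nodes, $\lfloor t_k(u)\rfloor$ the number of internal nodes of the subtree rooted at $u$), and $s(t_k)$ is the number of internal nodes of $t_k$ whose two child subtrees are isomorphic.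
   Context: All trees are finite, rooted, binary. A plane tree has the two children of each internal node ordered left/right; forgetting this order gives a (non-plane) tree, up to rooted isomorphism. An internal ranking labels the $k-1$ internal nodes bijectively by $\{1,\dots,k-1\}$ with root rank $1$ and ranks increasing along paths away from the root; a ranked plane tree is a plane tree with an internal ranking. A splitting process starts from a single root leaf and, at step $i=1,\dots,k-1$, chooses one current leaf at random, gives it rank $i$ and attaches a new left leaf and a new right leaf; the result is a random ranked plane tree with $k$ leaves. Equivalently, encoding plane trees by dyadic partitions of $[0,1]$ obtained by recursive midpoint bisection, the process is a sequence of interval bisections. It is a Markov splitting model if the conditional probability of which leaf is split next depends on the history only through the current (unranked) plane tree, i.e. the current partition. *)

(* Defs.v *)
From HB Require Import structures.
From mathcomp Require Import all_boot all_order all_algebra.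
Set Implicit Arguments. Unset Strict Implicit. Unset Printing Implicit Defensive.
Import Order.TTheory GRing.Theory Num.Theory.

Inductive ptree := Leaf | Node of ptree & ptree.

Fixpoint ptree_eqb (a b : ptree) : bool :=
  match a, b with
  | Leaf, Leaf => true
  | Node a1 a2, Node b1 b2 => ptree_eqb a1 b1 && ptree_eqb a2 b2
  | _, _ => false
  end.

Lemma ptree_eqP : Equality.axiom ptree_eqb.
Proof.
elim=> [|a1 IH1 a2 IH2] [|b1 b2] /=; try by constructor.
case: (IH1 b1) => [->|h]; last by constructor; case.
case: (IH2 b2) => [->|h]; last by constructor; case.
by constructor.
Qed.
HB.instance Definition _ := hasDecEq.Build ptree ptree_eqP.

Fixpoint nleaves (t : ptree) : nat :=
  match t with Leaf => 1 | Node l r => nleaves l + nleaves r end.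

Fixpoint ninternal (t : ptree) : nat :=
  match t with Leaf => 0 | Node l r => (ninternal l + ninternal r).+1 end.

(* rooted isomorphism of binary trees (forgetting left/right order):
   two plane trees have the same underlying (non-plane) tree iff [tree_iso] *)
Fixpoint tree_iso (a b : ptree) : bool :=
  match a, b with
  | Leaf, Leaf => true
  | Node a1 a2, Node b1 b2 => (tree_iso a1 b1 && tree_iso a2 b2) || (tree_iso a1 b2 && tree_iso a2 b1)
  | _, _ => false
  end.

Fixpoint prod_internal (t : ptree) : nat :=
  match t with
  | Leaf => 1
  | Node l r => ninternal t * prod_internal l * prod_internal r
  end.

Fixpoint nsym (t : ptree) : nat :=
  match t with
  | Leaf => 0
  | Node l r => (tree_iso l r : nat) + nsym l + nsym r
  end.

Definition Bcoef (R : fieldType) (t : ptree) : R :=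
  ((nleaves t).-1 `!)%N%:R / (prod_internal t)%:R.

(* internal nodes carry their rank *)
Inductive rtree := RLeaf | RNode of nat & rtree & rtree.

Fixpoint rtree_eqb (a b : rtree) : bool :=
  match a, b with
  | RLeaf, RLeaf => true
  | RNode x a1 a2, RNode y b1 b2 => (x == y) && rtree_eqb a1 b1 && rtree_eqb a2 b2
  | _, _ => false
  end.

Lemma rtree_eqP : Equality.axiom rtree_eqb.
Proof.
elim=> [|x a1 IH1 a2 IH2] [|y b1 b2] /=; try by constructor.
case: (x =P y) => [->|h]; last by constructor; case.
case: (IH1 b1) => [->|h]; last by constructor; case.
case: (IH2 b2) => [->|h]; last by constructor; case.
by constructor.
Qed.
HB.instance Definition _ := hasDecEq.Build rtree rtree_eqP.

Fixpoint plane_of (t : rtree) : ptree :=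
  match t with RLeaf => Leaf | RNode _ l r => Node (plane_of l) (plane_of r) end.

Fixpoint ranks (t : rtree) : seq nat :=
  match t with RLeaf => [::] | RNode x l r => x :: ranks l ++ ranks r end.

Definition rank_below (x : nat) (t : rtree) : bool :=
  match t with RLeaf => true | RNode y _ _ => x < y end.

Fixpoint increasing (t : rtree) : bool :=
  match t with
  | RLeaf => true
  | RNode x l r => [&& rank_below x l, rank_below x r, increasing l & increasing r]
  end.

Definition root_rank_one (t : rtree) : bool :=
  match t with RLeaf => true | RNode x _ _ => x == 1 end.

Definition is_ranked (k : nat) (t : rtree) : bool :=
  [&& nleaves (plane_of t) == k, perm_eq (ranks t) (iota 1 k.-1),
      root_rank_one t & increasing t].

(* split the i-th leaf (leaves numbered 0,1,... from left to right),
   giving the new internal node rank r *)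
Fixpoint rsplit (t : rtree) (i r : nat) : rtree :=
  match t with
  | RLeaf => if i == 0 then RNode r RLeaf RLeaf else RLeaf
  | RNode x l rr =>
      if i < nleaves (plane_of l) then RNode x (rsplit l i r) rr
      else RNode x l (rsplit rr (i - nleaves (plane_of l)) r)
  end.

(* all histories of n steps: at step j (j = 1..n) a leaf index < j is chosen
   (the current tree has j leaves) *)
Fixpoint histories (n : nat) : seq (seq nat) :=
  match n with
  | 0 => [:: [::]]
  | n'.+1 => [seq rcons h i | h <- histories n', i <- iota 0 n'.+1]
  end.

Fixpoint build_from (t : rtree) (j : nat) (h : seq nat) : rtree :=
  match h with
  | [::] => t
  | i :: h' => build_from (rsplit t i j) j.+1 h'
  end.

Definition build (h : seq nat) : rtree := build_from RLeaf 1 h.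

Local Open Scope ring_scope.
Section Model.
Variable R : numFieldType.
(* A Markov splitting model: p t i = probability of splitting leaf i
   (left-to-right index) when the current plane tree is t. *)
Variable p : ptree -> nat -> R.

Fixpoint weight_from (t : rtree) (j : nat) (h : seq nat) : R :=
  match h with
  | [::] => 1
  | i :: h' => p (plane_of t) i * weight_from (rsplit t i j) j.+1 h'
  end.

Definition weight (h : seq nat) : R := weight_from RLeaf 1 h.

Definition prob_ranked (k : nat) (rt : rtree) : R :=
  \sum_(h <- histories k.-1 | build h == rt) weight h.

Definition prob_plane (k : nat) (t : ptree) : R :=
  \sum_(h <- histories k.-1 | plane_of (build h) == t) weight h.

Definition prob_tree (k : nat) (t : ptree) : R :=
  \sum_(h <- histories k.-1 | tree_iso (plane_of (build h)) t) weight h.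
End Model.

Definition markov_splitting_model (R : numFieldType) (p : ptree -> nat -> R) : Prop :=
  (forall t i, 0 <= p t i) /\
  (forall t, \sum_(i < nleaves t) p t i = 1).

(* Main.v *)
Require Import Defs.
From HB Require Import structures.
From mathcomp Require Import all_boot all_order all_algebra zify ring.
Import Order.TTheory GRing.Theory Num.Theory.

Fixpoint psplit (t : ptree) (i : nat) : ptree :=
  match t with
  | Leaf => if i == 0 then Node Leaf Leaf else Leaf
  | Node l r => if i < nleaves l then Node (psplit l i) r
                else Node l (psplit r (i - nleaves l))
  end.

Fixpoint pbuild (t : ptree) (h : seq nat) : ptree :=
  match h with [::] => t | i :: h' => pbuild (psplit t i) h' end.

Fixpoint valid (a : nat) (h : seq nat) : bool :=
  match h with [::] => true | i :: h' => (i < a) && valid a.+1 h' end.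

Fixpoint hf (a m : nat) : seq (seq nat) :=
  match m with 0 => [:: [::]]
  | m'.+1 => [seq i :: h | i <- iota 0 a, h <- hf a.+1 m'] end.

Definition Sc (s : ptree) (m : nat) (t : ptree) : nat :=
  \sum_(h <- hf (nleaves s) m) (pbuild s h == t).

Lemma nleaves_psplit t i : i < nleaves t -> nleaves (psplit t i) = (nleaves t).+1.
Proof.
elim: t i => [|l IHl r IHr] i /=; first by case: i.
case: ifP => hi /=; first by rewrite IHl // addSn.
move=> H; rewrite IHr ?addnS //; lia.
Qed.

Lemma nint_psplit t i : i < nleaves t -> ninternal (psplit t i) = (ninternal t).+1.
Proof.
elim: t i => [|l IHl r IHr] i /=; first by case: i.
case: ifP => hi /=; first by rewrite IHl // addSn.
move=> H; rewrite IHr ?addnS //; lia.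
Qed.

Lemma nleaves_nint t : nleaves t = (ninternal t).+1.
Proof. elim: t => //= l -> r ->; lia. Qed.

Lemma plane_rsplit t i j : plane_of (rsplit t i j) = psplit (plane_of t) i.
Proof.
elim: t i => [|x l IHl r IHr] i /=; first by case: (i == 0).
by case: ifP => _ /=; rewrite ?IHl ?IHr.
Qed.

Lemma plane_build_from t j h : plane_of (build_from t j h) = pbuild (plane_of t) h.
Proof. elim: h t j => [|i h IH] t j //=; by rewrite IH plane_rsplit. Qed.

Lemma mem_hf a m h : (h \in hf a m) = (size h == m) && valid a h.
Proof.
elim: m a h => [|m IH] a [|i h] //=.
- by apply/negbTE/allpairsP => -[[x y] [_ _]].
- apply/allpairsP/and3P.
  + move=> [[x y] [/= hx hy [-> ->]]]; rewrite mem_iota in hx; rewrite IH in hy.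
    case/andP: hy => /eqP -> ->; split=> //; lia.
  + move=> [/eqP[hs] hi hv]; exists (i, h); split => //=.
    by rewrite mem_iota; lia.
    by rewrite IH hs eqxx.
Qed.

Lemma uniq_hf a m : uniq (hf a m).
Proof.
elim: m a => [|m IH] a //=.
apply: allpairs_uniq => //; first exact: iota_uniq.
by move=> [x1 y1] [x2 y2] _ _ /= [-> ->].
Qed.

Lemma valid_rcons a h i : valid a (rcons h i) = valid a h && (i < a + size h).
Proof.
elim: h a => [|x h IH] a /=; first by rewrite addn0 andbT.
by rewrite IH addSnnS andbA.
Qed.

Lemma histories_S n : histories n.+1 = [seq rcons h i | h <- histories n, i <- iota 0 n.+1].
Proof. by []. Qed.

Lemma mem_histories n h : (h \in histories n) = (size h == n) && valid 1 h.
Proof.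
elim: n h => [|n IH] h.
  by case: h => [|x h]; rewrite ?inE //.
rewrite histories_S.
apply/allpairsP/andP.
- move=> [[x y] [hx hy ->]]; rewrite IH in hx; rewrite mem_iota in hy; simpl in hx, hy |- *.
  case/andP: hx => /eqP hs hv; rewrite size_rcons hs valid_rcons hv hs; split=> //; lia.
- case/lastP: h => [|h y]; first by case.
  rewrite size_rcons valid_rcons => -[/eqP[hs] /andP[hv hy]].
  exists (h, y); split => //; first by rewrite IH hs eqxx.
  rewrite mem_iota /=; move: hy; rewrite hs; lia.
Qed.

Lemma uniq_histories n : uniq (histories n).
Proof.
elim: n => [|n IH] //.
rewrite histories_S; apply: allpairs_uniq => //; first exact: iota_uniq.
move=> [x1 y1] [x2 y2] _ _ /= H.
have := congr1 size H; rewrite !size_rcons => -[hs].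
by move/eqP: H; rewrite eqseq_rcons => /andP[/eqP -> /eqP ->].
Qed.

Lemma perm_hist n : perm_eq (histories n) (hf 1 n).
Proof.
apply: uniq_perm; [exact: uniq_histories | exact: uniq_hf |].
by move=> h; rewrite mem_histories mem_hf.
Qed.

Lemma Sc_rec s m t :
  Sc s m.+1 t = \sum_(i <- iota 0 (nleaves s)) Sc (psplit s i) m t.
Proof.
rewrite /Sc /= big_allpairs_dep /=; apply: eq_big_seq => i.
by rewrite mem_iota => /andP[_ hi]; rewrite nleaves_psplit.
Qed.

Lemma nint_pbuild s h : valid (nleaves s) h ->
  ninternal (pbuild s h) = ninternal s + size h.
Proof.
elim: h s => [|i h IH] s /=; first by rewrite addn0.
case/andP=> hi hv; rewrite IH ?nleaves_psplit // nint_psplit //; lia.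
Qed.

Lemma Sc_zero s m t : ninternal t != ninternal s + m -> Sc s m t = 0.
Proof.
move=> hne; rewrite /Sc big_seq big1 // => h; rewrite mem_hf => /andP[/eqP hs hv].
apply/eqP; rewrite eqb0; apply/eqP => E.
by move: hne; rewrite -E nint_pbuild // hs eqxx.
Qed.

Lemma Sc0 s t : Sc s 0 t = (s == t).
Proof. by rewrite /Sc /= big_seq1. Qed.

Lemma eq_Node a b c d : (Node a b == Node c d) = (a == c) && (b == d).
Proof. by []. Qed.

Lemma conv_step m (X Y : nat -> nat) :
  \sum_(a < m.+1) 'C(m, a) * X a.+1 * Y (m - a) +
  \sum_(a < m.+1) 'C(m, a) * X a * Y (m - a).+1
  = \sum_(a < m.+2) 'C(m.+1, a) * X a * Y (m.+1 - a).
Proof.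
rewrite [in RHS]big_ord_recl /= bin0 !mul1n subn0.
under [in RHS]eq_bigr do rewrite binS mulnDl mulnDl.
rewrite big_split /=.
rewrite [X in _ = _ + (_ + X)](_ : _ = \sum_(a < m.+1) 'C(m, a) * X a.+1 * Y (m - a)); last first.
  by apply: eq_bigr => a _; rewrite /bump /= add1n subSS.
rewrite addnA [in RHS]addnC; congr (_ + _).
rewrite big_ord_recl /= bin0 mul1n subn0 [in RHS]big_ord_recr /= bin_small // mul0n mul0n addn0.
congr (_ + _); apply: eq_bigr => a _; rewrite /bump /= add1n subSS -subSn ?subSS //.
Qed.

Lemma Sc_node m sl sr tl tr :
  Sc (Node sl sr) m (Node tl tr) =
  \sum_(a < m.+1) 'C(m, a) * Sc sl a tl * Sc sr (m - a) tr.
Proof.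
elim: m sl sr => [|m IH] sl sr.
  rewrite big_ord1 !Sc0 eq_Node bin0 mul1n.
  by case: (sl == tl); case: (sr == tr).
rewrite Sc_rec /= iotaD big_cat /= add0n.
have -> : \sum_(i <- iota 0 (nleaves sl)) Sc (psplit (Node sl sr) i) m (Node tl tr)
   = \sum_(a < m.+1) 'C(m, a) * Sc sl a.+1 tl * Sc sr (m - a) tr.
  rewrite (eq_big_seq (fun i => Sc (Node (psplit sl i) sr) m (Node tl tr))); last first.
    by move=> i; rewrite mem_iota add0n => /andP[_ hi] /=; rewrite hi.
  under eq_bigr do rewrite IH.
  rewrite exchange_big; apply: eq_bigr => a _.
  by rewrite [Sc sl a.+1 tl]Sc_rec (big_distrr ('C(m, a))) (big_distrl (Sc sr (m - a) tr)).
have -> : \sum_(i <- iota (nleaves sl) (nleaves sr)) Sc (psplit (Node sl sr) i) m (Node tl tr)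
   = \sum_(a < m.+1) 'C(m, a) * Sc sl a tl * Sc sr (m - a).+1 tr.
  rewrite -[nleaves sl]addn0 iotaDl big_map.
  rewrite (eq_big_seq (fun i => Sc (Node sl (psplit sr i)) m (Node tl tr))); last first.
    by move=> i _ /=; rewrite ltnNge leq_addr /= addKn.
  under eq_bigr do rewrite IH.
  rewrite exchange_big; apply: eq_bigr => a _.
  by rewrite [Sc sr (m - a).+1 tr]Sc_rec (big_distrr ('C(m, a) * Sc sl a tl)).
exact: (conv_step m (fun a => Sc sl a tl) (fun b => Sc sr b tr)).
Qed.

Lemma Sc_Leaf t : Sc Leaf (ninternal t) t * prod_internal t = (ninternal t)`!.
Proof.
elim: t => [|l IHl r IHr]; first by rewrite Sc0.
rewrite [ninternal (Node l r)]/= Sc_rec /= big_seq1 /= Sc_node.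
set x := ninternal l + ninternal r.
have hl : ninternal l < x.+1 by rewrite /x; lia.
rewrite (bigD1 (Ordinal hl)) //= big1 ?addn0; last first.
  move=> a ha; rewrite Sc_zero ?mul0n ?muln0 //=.
  apply: contra ha => /eqP e; apply/eqP/val_inj => /=; lia.
have -> : x - ninternal l = ninternal r by rewrite /x; lia.
rewrite -/x.
have -> : 'C(x, ninternal l) * Sc Leaf (ninternal l) l * Sc Leaf (ninternal r) r *
   ((x.+1) * prod_internal l * prod_internal r)
   = 'C(x, ninternal l) * (Sc Leaf (ninternal l) l * prod_internal l) *
     (Sc Leaf (ninternal r) r * prod_internal r) * x.+1 by ring.
rewrite IHl IHr factS -(@bin_fact x (ninternal l)); last by rewrite /x leq_addr.
have -> : x - ninternal l = ninternal r by rewrite /x; lia.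
ring.
Qed.

Lemma nleaves_rsplit t i j : i < nleaves (plane_of t) ->
  nleaves (plane_of (rsplit t i j)) = (nleaves (plane_of t)).+1.
Proof. by move=> hi; rewrite plane_rsplit nleaves_psplit. Qed.

Lemma ranks_rsplit t i j : i < nleaves (plane_of t) ->
  perm_eq (ranks (rsplit t i j)) (j :: ranks t).
Proof.
elim: t i => [|x l IHl r IHr] i /=; first by case: i.
case: ifP => hi H /=.
  by apply/permP => a /=; rewrite !count_cat (permP (IHl _ hi) a) /=; lia.
have hi' : i - nleaves (plane_of l) < nleaves (plane_of r) by lia.
by apply/permP => a /=; rewrite !count_cat (permP (IHr _ hi') a) /=; lia.
Qed.

Lemma ranks_build t j h : valid (nleaves (plane_of t)) h ->
  perm_eq (ranks (build_from t j h)) (ranks t ++ iota j (size h)).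
Proof.
elim: h t j => [|i h IH] t j /=; first by rewrite cats0.
case/andP=> hi hv.
have := IH (rsplit t i j) j.+1; rewrite nleaves_rsplit // => /(_ hv) H.
apply/permP => a; rewrite (permP H a) !count_cat (permP (ranks_rsplit t i j hi) a) /=; lia.
Qed.

Lemma rank_below_rsplit x t i j : rank_below x t -> x < j -> rank_below x (rsplit t i j).
Proof.
case: t => [|y l r] /= h1 h2; first by case: (i == 0).
by case: ifP.
Qed.

Lemma incr_rsplit t i j : increasing t -> all (fun y => y < j) (ranks t) ->
  increasing (rsplit t i j).
Proof.
elim: t i => [|x l IHl r IHr] i /=; first by case: (i == 0).
case/and4P=> bl br il ir; rewrite all_cat => /andP[hx /andP[al ar]].
case: ifP => _ /=.
  by rewrite br ir (rank_below_rsplit _ _ _ _ bl hx) (IHl _ il al).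
by rewrite bl il (rank_below_rsplit _ _ _ _ br hx) (IHr _ ir ar).
Qed.

Lemma incr_build t j h : increasing t -> all (fun y => y < j) (ranks t) ->
  valid (nleaves (plane_of t)) h -> increasing (build_from t j h).
Proof.
elim: h t j => [|i h IH] t j //= it hat /andP[hi hv].
apply: IH; first exact: incr_rsplit.
  rewrite (perm_all _ (ranks_rsplit t i j hi)) /= ltnSn /=.
  by apply: sub_all hat => y /ltnW.
by rewrite nleaves_rsplit.
Qed.

Lemma root_build_from l r j h : root_rank_one (build_from (RNode 1 l r) j h).
Proof.
elim: h l r j => [|i h IH] l r j //=.
by case: ifP => _; apply: IH.
Qed.

Lemma is_ranked_build n h : h \in histories n -> is_ranked n.+1 (build h).
Proof.
rewrite mem_histories => /andP[/eqP hs hv].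
apply/and4P; split.
- by rewrite /build plane_build_from nleaves_nint nint_pbuild // hs.
- by have := ranks_build RLeaf 1 h hv; rewrite /= hs.
- case: h hs hv => [|i h] // _ /andP[hi _]; have -> : i = 0 by lia.
  exact: root_build_from.
- exact: incr_build.
Qed.

Fixpoint trim (r : nat) (t : rtree) : rtree :=
  match t with RLeaf => RLeaf
  | RNode x l rr => if x <= r then RNode x (trim r l) (trim r rr) else RLeaf end.

Lemma trim_rsplit r t i j : r < j -> trim r (rsplit t i j) = trim r t.
Proof.
move=> hr; elim: t i => [|x l IHl rr IHr] i /=.
  by case: (i == 0) => //=; rewrite leqNgt hr.
by case: ifP => _ /=; case: ifP => // _; rewrite ?IHl ?IHr.
Qed.

Lemma trim_build r t j h : r < j -> trim r (build_from t j h) = trim r t.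
Proof.
elim: h t j => [|i h IH] t j //= hr.
by rewrite IH ?trim_rsplit // ltnW.
Qed.

Lemma trim_id r t : all (fun y => y <= r) (ranks t) -> trim r t = t.
Proof.
elim: t => [|x l IHl rr IHr] //=; rewrite all_cat => /andP[-> /andP[al ar]].
by rewrite IHl ?IHr.
Qed.

Lemma rsplit_inj t i1 i2 j : i1 < nleaves (plane_of t) -> i2 < nleaves (plane_of t) ->
  rsplit t i1 j = rsplit t i2 j -> i1 = i2.
Proof.
elim: t i1 i2 => [|x l IHl rr IHr] i1 i2 /=; first by lia.
move=> h1 h2.
have nl1 : forall i, i < nleaves (plane_of l) -> rsplit l i j <> l.
  move=> i hi E; have := congr1 (fun t => ninternal (plane_of t)) E.
  by rewrite /= plane_rsplit nint_psplit //; lia.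
have nr1 : forall i, i < nleaves (plane_of rr) -> rsplit rr i j <> rr.
  move=> i hi E; have := congr1 (fun t => ninternal (plane_of t)) E.
  by rewrite /= plane_rsplit nint_psplit //; lia.
case: ifP => a1; case: ifP => a2 [].
- by move/IHl; apply.
- by move=> E; case: (nl1 _ a1 E).
- by move=> E; case: (nl1 _ a2 (esym E)).
- move=> /IHr; lia.
Qed.

Lemma build_from_inj t j h1 h2 : all (fun y => y < j) (ranks t) ->
  valid (nleaves (plane_of t)) h1 -> valid (nleaves (plane_of t)) h2 ->
  size h1 = size h2 -> build_from t j h1 = build_from t j h2 -> h1 = h2.
Proof.
elim: h1 t j h2 => [|i1 h1 IH] t j [|i2 h2] //= hat /andP[hi1 hv1] /andP[hi2 hv2] [hs] E.
have E1 : rsplit t i1 j = rsplit t i2 j.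
  have := congr1 (trim j) E; rewrite !trim_build // !trim_id //.
  - rewrite (perm_all _ (ranks_rsplit t i2 j hi2)) /= leqnn /=.
    by apply: sub_all hat => y /ltnW.
  - rewrite (perm_all _ (ranks_rsplit t i1 j hi1)) /= leqnn /=.
    by apply: sub_all hat => y /ltnW.
have ei := rsplit_inj _ _ _ _ hi1 hi2 E1; subst i2; congr (_ :: _).
apply: (IH (rsplit t i1 j) j.+1) => //.
- rewrite (perm_all _ (ranks_rsplit t i1 j hi1)) /= ltnSn /=.
  by apply: sub_all hat => y /ltnW.
- by rewrite nleaves_rsplit.
- by rewrite nleaves_rsplit.
Qed.

Lemma iso_refl t : tree_iso t t.
Proof. by elim: t => //= l -> r ->. Qed.

Lemma iso_sym a b : tree_iso a b = tree_iso b a.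
Proof.
elim: a b => [|a1 IH1 a2 IH2] [|b1 b2] //=.
by rewrite IH1 IH2 IH1 IH2 [tree_iso b2 a1 && _]andbC.
Qed.

Lemma iso_trans a b c : tree_iso a b -> tree_iso b c -> tree_iso a c.
Proof.
elim: a b c => [|a1 IH1 a2 IH2] [|b1 b2] [|c1 c2] //=.
case/orP=> /andP[h1 h2] /orP[] /andP[g1 g2].
- by rewrite (IH1 _ _ h1 g1) (IH2 _ _ h2 g2).
- by rewrite (IH1 _ _ h1 g1) (IH2 _ _ h2 g2) orbT.
- by rewrite (IH1 _ _ h1 g2) (IH2 _ _ h2 g1) orbT.
- by rewrite (IH1 _ _ h1 g2) (IH2 _ _ h2 g1).
Qed.

Lemma iso_nint a b : tree_iso a b -> ninternal a = ninternal b.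
Proof.
elim: a b => [|a1 IH1 a2 IH2] [|b1 b2] //=.
case/orP=> /andP[/IH1 -> /IH2 ->] //; lia.
Qed.

Lemma iso_nleaves a b : tree_iso a b -> nleaves a = nleaves b.
Proof. by move/iso_nint; rewrite !nleaves_nint => ->. Qed.

Lemma iso_prod a b : tree_iso a b -> prod_internal a = prod_internal b.
Proof.
elim: a b => [|a1 IH1 a2 IH2] [|b1 b2] //= H.
case/orP: H => /andP[h1 h2].
  by rewrite (IH1 _ h1) (IH2 _ h2) (iso_nint _ _ h1) (iso_nint _ _ h2).
rewrite (IH1 _ h1) (IH2 _ h2) (iso_nint _ _ h1) (iso_nint _ _ h2).
rewrite [ninternal b2 + _]addnC; ring.
Qed.

Lemma prod_gt0 t : 0 < prod_internal t.
Proof. elim: t => //= l hl r hr; rewrite !muln_gt0 hl hr. done. Qed.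

Lemma nsym_le t : nsym t <= ninternal t.
Proof. elim: t => //= l hl r hr; case: (tree_iso l r) => /=; lia. Qed.

Fixpoint emb (t : ptree) : seq ptree :=
  match t with
  | Leaf => [:: Leaf]
  | Node l r => [seq Node a b | a <- emb l, b <- emb r] ++
      (if tree_iso l r then [::] else [seq Node a b | a <- emb r, b <- emb l])
  end.

Lemma mem_allNode (s1 s2 : seq ptree) x :
  (x \in [seq Node a b | a <- s1, b <- s2]) =
  if x is Node a b then (a \in s1) && (b \in s2) else false.
Proof.
apply/allpairsP/idP.
  by move=> [[a b] [/= ha hb ->]]; rewrite ha hb.
case: x => // a b /andP[ha hb]; by exists (a, b).
Qed.

Lemma mem_emb t x : (x \in emb t) = tree_iso x t.
Proof.
elim: t x => [|l IHl r IHr] x.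
  by case: x => [|a b]; rewrite inE.
rewrite /= mem_cat mem_allNode.
case: x => [|a b]; first by case: (tree_iso l r) => //; rewrite mem_allNode.
rewrite /= IHl IHr.
case: ifP => hlr; last by rewrite mem_allNode IHl IHr.
rewrite in_nil orbF; apply/idP/idP => [-> //|].
case/orP => // /andP[h1 h2].
have hrl : tree_iso r l by rewrite iso_sym.
by rewrite (iso_trans _ _ _ h1 hrl) (iso_trans _ _ _ h2 hlr).
Qed.

Lemma uniq_allNode (s1 s2 : seq ptree) : uniq s1 -> uniq s2 ->
  uniq [seq Node a b | a <- s1, b <- s2].
Proof.
move=> u1 u2; apply: allpairs_uniq => //.
by move=> [a1 b1] [a2 b2] _ _ /= [-> ->].
Qed.

Lemma uniq_emb t : uniq (emb t).
Proof.
elim: t => //= l IHl r IHr.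
rewrite cat_uniq uniq_allNode //=.
case: ifP => hlr //=; rewrite uniq_allNode // andbT.
apply/hasPn => -[|a b]; rewrite mem_allNode //= => /andP[ha hb].
rewrite mem_allNode; apply/negP => /andP[ha' _].
move: ha ha'; rewrite !mem_emb => h1 h2.
by rewrite iso_sym in h2; rewrite (iso_trans _ _ _ h2 h1) in hlr.
Qed.

Lemma size_emb t : size (emb t) = 2 ^ (ninternal t - nsym t).
Proof.
elim: t => //= l IHl r IHr.
have hl := nsym_le l; have hr := nsym_le r.
rewrite size_cat !size_allpairs IHl IHr.
case: ifP => _ /=.
  rewrite addn0 -expnD; congr (2 ^ _); lia.
rewrite size_allpairs IHl IHr mulnC addnn -muln2 -expnD -expnSr; congr (2 ^ _); lia.
Qed.

Local Open Scope ring_scope.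

Lemma big_pred1_in (V : nmodType) (T : eqType) (s : seq T) x (P : pred T) (F : T -> V) :
  uniq s -> x \in s -> {in s, forall y, P y = (y == x)} ->
  \sum_(y <- s | P y) F y = F x.
Proof.
elim: s => [|y s IH] //= /andP[ys us] xs HP.
rewrite big_cons HP ?mem_head //.
case: eqP => [eyx|ne].
  rewrite big1_seq ?addr0 ?eyx // => z /andP[Pz zs].
  move: Pz; rewrite HP ?inE ?zs ?orbT // => /eqP ezx.
  by move: ys; rewrite eyx -ezx zs.
rewrite IH //; first by move: xs; rewrite inE => /orP[/eqP e|//]; case: ne.
by move=> z zs; apply: HP; rewrite inE zs orbT.
Qed.

Lemma big_pred1_opt (V : nmodType) (T : eqType) (s : seq T) x (c : V) :
  uniq s -> \sum_(y <- s | x == y) c = if x \in s then c else 0.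
Proof.
move=> us; case: ifP => xs.
  by apply: (big_pred1_in _ _ s x (fun y => x == y) (fun _ => c) us xs) => y _; rewrite eq_sym.
rewrite big1_seq // => y /andP[/eqP exy ys]; by move: xs; rewrite exy ys.
Qed.

Lemma sum_const_cond (R : numFieldType) (T : Type) (s : seq T) (P : pred T) (c : R) :
  \sum_(y <- s | P y) c = (\sum_(y <- s) (P y : nat))%N%:R * c.
Proof.
elim: s => [|y s IH]; first by rewrite !big_nil mul0r.
rewrite !big_cons; case: (P y) => /=; last by rewrite add0n.
by rewrite IH natrD mulrDl mul1r.
Qed.

Lemma sum_const_seq (R : numFieldType) (T : Type) (s : seq T) (c : R) :
  \sum_(y <- s) c = (size s)%:R * c.
Proof.
elim: s => [|y s IH]; first by rewrite big_nil mul0r.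
by rewrite big_cons IH /= -(addn1 (size s)) natrD mulrDl mul1r addrC.
Qed.

Lemma build_inj_hist n h1 h2 : h1 \in histories n -> h2 \in histories n ->
  build h1 = build h2 -> h1 = h2.
Proof.
rewrite !mem_histories => /andP[/eqP s1 v1] /andP[/eqP s2 v2].
apply: build_from_inj => //; by rewrite s1 s2.
Qed.

Theorem theorem4p2 (R : numFieldType) (p : ptree -> nat -> R) (k : nat)
  (hmodel : markov_splitting_model p)
  (hsplit_exch : forall rt1 rt2 : rtree, is_ranked k rt1 -> is_ranked k rt2 ->
       plane_of rt1 = plane_of rt2 -> prob_ranked p k rt1 = prob_ranked p k rt2)
  (hplane_inv : forall t1 t2 : ptree, nleaves t1 = k -> nleaves t2 = k ->
       tree_iso t1 t2 -> prob_plane p k t1 = prob_plane p k t2) :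
  forall (t : ptree) (rt : rtree),
    nleaves t = k -> is_ranked k rt -> tree_iso (plane_of rt) t ->
    prob_tree p k t =
      Bcoef R t * (2 ^ (k.-1 - nsym t))%:R * prob_ranked p k rt.
Proof.
move=> t rt hk hrt hiso.
set n := k.-1.
have kn : k = n.+1 by rewrite /n -hk nleaves_nint.
set x := plane_of rt.
have hxk : nleaves x = k by case/and4P: hrt => /eqP.
have step1 : prob_tree p k t = \sum_(t' <- emb t) prob_plane p k t'.
  rewrite /prob_plane.
  under [RHS]eq_bigr do rewrite big_mkcond.
  rewrite exchange_big /prob_tree big_mkcond; apply: eq_bigr => h _.
  rewrite -big_mkcond /= big_pred1_opt ?uniq_emb // mem_emb.
  by case: ifP.
have step2 : prob_tree p k t = (size (emb t))%:R * prob_plane p k x.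
  rewrite step1 -sum_const_seq; apply: eq_big_seq => t'; rewrite mem_emb => ht'.
  apply: hplane_inv => //; first by rewrite (iso_nleaves _ _ ht').
  by apply: (iso_trans _ _ _ ht'); rewrite iso_sym.
have step3 : prob_plane p k x = (Sc Leaf n x)%:R * prob_ranked p k rt.
  rewrite /prob_plane -/n.
  rewrite big_seq_cond (eq_bigr (fun _ => prob_ranked p k rt)); last first.
    move=> h /andP[hh /eqP hx].
    have hr : is_ranked k (build h) by rewrite kn; apply: is_ranked_build.
    rewrite -(hsplit_exch _ _ hr hrt hx) /prob_ranked -/n.
    by rewrite (big_pred1_in _ _ _ _ _ (weight p) (uniq_histories n) hh) // => y hy;
       apply/eqP/eqP => [/(build_inj_hist _ _ _ hy hh)|->].
  rewrite -big_seq_cond sum_const_cond; congr (_%:R * _).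
  rewrite /Sc /= (perm_big _ (perm_hist n)) /=.
  by apply: eq_bigr => h _; rewrite /build plane_build_from.
rewrite step2 step3 size_emb.
have nx : ninternal x = n by apply: succn_inj; rewrite -nleaves_nint hxk kn.
have nt : ninternal t = n by rewrite -(iso_nint _ _ hiso).
have hS := Sc_Leaf x; rewrite nx (iso_prod _ _ hiso) in hS.
have hB : Bcoef R t = (Sc Leaf n x)%:R.
  rewrite /Bcoef hk -/n -hS natrM mulfK // pnatr_eq0 -lt0n; exact: prod_gt0.
rewrite hB nt; ring.
Qed.
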